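(* There exist an odd integer $m\ge 3$, a positive integer $n$, and a nonzero, non-symmetric tensor $\mathbb{A}\in T_{m,n}$ that is a $P_0$ tensor.
   Context: $T_{m,n}$ denotes the set of real $m$th order $n$-dimensional tensors $\mathbb{A}=(a_{i_1i_2\ldots i_m})$ with $i_j\in[n]=\{1,\ldots,n\}$. A tensor is symmetric if its entries are invariant under any permutation of the indices. For $x\in\mathbb{R}^n$, $(\mathbb{A}x^{m-1})_i=\sum_{i_2,\ldots,i_m=1}^n a_{ii_2\ldots i_m}x_{i_2}\cdots x_{i_m}$, $i\in[n]$. A tensor $\mathbb{A}\in T_{m,n}$ is a $P_0$ tensor if for every nonzero $x\in\mathbb{R}^n$ there exists $i\in[n]$ with $x_i\neq 0$ and $x_i(\mathbb{A}x^{m-1})_i\ge 0$. *)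

(* Defs.v *)
From Stdlib Require Import Reals.
From HB Require Import structures.
From mathcomp Require Import all_boot all_order all_algebra all_fingroup.
From mathcomp Require Import Rstruct.
Set Implicit Arguments. Unset Strict Implicit. Unset Printing Implicit Defensive.
Import Order.TTheory GRing.Theory Num.Theory.
Local Open Scope ring_scope.

(* Multi-indices (i_1,...,i_m) with i_j in [n] = 'I_n (0-based). *)
Definition mindex (m n : nat) := {ffun 'I_m -> 'I_n}.

Definition tensor (m n : nat) := {ffun mindex m n -> R}.

Definition symmetric_tensor (m n : nat) (A : tensor m n) : Prop :=
  forall (s : mindex m n) (sigma : 'S_m),
    A [ffun k => s (sigma k)] = A s.

(* (A x^{m-1})_i = sum_{i_2..i_m} a_{i i_2 ... i_m} x_{i_2} ... x_{i_m}:
   sum over all multi-indices whose first index is i. *)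
Definition tensor_apply (m n : nat) (A : tensor m n) (x : 'I_n -> R) (i : 'I_n) : R :=
  \sum_(s : mindex m n | [forall k : 'I_m, (nat_of_ord k == 0)%N ==> (s k == i)])
     A s * \prod_(k : 'I_m | (nat_of_ord k != 0)%N) x (s k).

Definition P0_tensor (m n : nat) (A : tensor m n) : Prop :=
  forall x : 'I_n -> R, (exists j, x j != 0) ->
    exists i : 'I_n, x i != 0 /\ 0 <= x i * tensor_apply A x i.

(* Main.v *)
Require Import Defs.
From Stdlib Require Import Reals.
From HB Require Import structures.
From mathcomp Require Import all_boot all_order all_algebra all_fingroup.
From mathcomp Require Import Rstruct.
Import Order.TTheory GRing.Theory Num.Theory.
Local Open Scope ring_scope.

Definition i1 : 'I_2 := ord_max.
Definition k1 : 'I_3 := inord 1.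
Definition k2 : 'I_3 := ord_max.
Definition s0 : mindex 3 2 := [ffun k : 'I_3 => if k == k2 then i1 else ord0].
Definition A0 : tensor 3 2 := [ffun s => if s == s0 then 1 else 0].

Lemma A0s0 : A0 s0 = 1.
Proof. by rewrite ffunE eqxx. Qed.

Lemma app1 x : tensor_apply A0 x i1 = 0.
Proof.
rewrite /tensor_apply big1 // => s /forallP /(_ ord0) /= /eqP Hs.
rewrite ffunE; case: eqP => [E|_]; last by rewrite mul0r.
by move: Hs; rewrite E ffunE.
Qed.

Lemma app0 x : x i1 = 0 -> tensor_apply A0 x ord0 = 0.
Proof.
move=> hx; rewrite /tensor_apply big1 // => s _.
rewrite ffunE; case: eqP => [E|_]; last by rewrite mul0r.
rewrite (bigD1 k2) //= E ffunE eqxx hx. by rewrite !mul0r mulr0.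
Qed.

Theorem proposition2p3 :
  exists (m n : nat) (A : tensor m n),
    [/\ odd m, (3 <= m)%N & (0 < n)%N] /\
    [/\ A != 0, ~ symmetric_tensor A & P0_tensor A].
Proof.
exists 3%N, 2%N, A0; split; first by [].
split.
- apply/eqP => H; have := A0s0; rewrite H ffunE => /eqP; by rewrite eq_sym oner_eq0.
- move=> /(_ s0 (tperm k1 k2)); rewrite A0s0 ffunE.
  case: eqP => [E|_ /eqP]; last by rewrite eq_sym oner_eq0.
  have := congr1 (fun f : mindex 3 2 => f k2) E.
  rewrite !ffunE tpermR eqxx /k1 /k2.
  have -> : (inord 1 == ord_max :> 'I_3) = false by apply/eqP => /(congr1 val); rewrite /= inordK.
  by move/(congr1 val).
- move=> x [j hj].
  case: (eqVneq (x i1) 0) => h.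
  + exists ord0; split; last by rewrite app0 // mulr0.
    case: j hj => [[|[|//]] p] hj.
    * by rewrite (_ : ord0 = Ordinal p) //; apply/val_inj.
    * by move: hj; rewrite (_ : Ordinal p = i1) ?h ?eqxx //; apply/val_inj.
  + exists i1; split => //; by rewrite app1 mulr0.
Qed.
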